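(* Let $n$ be even and let $v_0,\dots,v_{n+1}\in\mathbb{R}^n$ be hereditarily spanning. Then $dP(v_0,\dots,v_{n+1})=0$.
   Context: For $v_1,\dots,v_n\in\mathbb{R}^n$, $\mathrm{Or}(v_1,\dots,v_n)\in\{-1,0,1\}$ is the sign of $\det(v_1,\dots,v_n)$ (zero if not a basis). Define $P:(\mathbb{R}^n)^{n+1}\to\{-1,0,1\}$ by $P(v_0,\dots,v_n)=\prod_{i=0}^n\mathrm{Or}(v_0,\dots,\widehat{v_i},\dots,v_n)$. A $k$-tuple ($k\ge n$) of vectors in $\mathbb{R}^n$ is hereditarily spanning if every subcollection of $n$ of its elements spans $\mathbb{R}^n$. The coboundary is $dP(v_0,\dots,v_{n+1})=\sum_{i=0}^{n+1}(-1)^iP(v_0,\dots,\widehat{v_i},\dots,v_{n+1})$. *)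

(* Defs.v *)
From HB Require Import structures.
From mathcomp Require Import all_boot all_order all_algebra.
Set Implicit Arguments. Unset Strict Implicit. Unset Printing Implicit Defensive.
Import Order.TTheory GRing.Theory Num.Theory.
Local Open Scope ring_scope.

Definition Or (R : realFieldType) (n : nat) (v : 'I_n -> 'rV[R]_n) : int :=
  sgz (\det (\matrix_(i < n) v i)).

Definition P (R : realFieldType) (n : nat) (v : 'I_n.+1 -> 'rV[R]_n) : int :=
  \prod_(i < n.+1) Or (fun j : 'I_n => v (lift i j)).

Definition dP (R : realFieldType) (n : nat) (v : 'I_n.+2 -> 'rV[R]_n) : int :=
  \sum_(i < n.+2) (-1) ^+ i * P (fun j : 'I_n.+1 => v (lift i j)).

Definition hereditarily_spanning (R : realFieldType) (n k : nat)
    (v : 'I_k -> 'rV[R]_n) : Prop :=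
  forall f : 'I_n -> 'I_k, injective f -> row_full (\matrix_(i < n) v (f i)).

(* Main.v *)
Set Warnings "-notation-overridden,-ambiguous-paths,-deprecated".
Require Import Defs.
From Stdlib Require Import Lia.
From HB Require Import structures.
From mathcomp Require Import all_boot all_order all_algebra.
Set Implicit Arguments. Unset Strict Implicit. Unset Printing Implicit Defensive.
Import Order.TTheory GRing.Theory Num.Theory.
Local Open Scope ring_scope.

Definition dt (R : realFieldType) m (x y : 'I_m -> R) p q := x p * y q - y p * x q.

Lemma dt_anti (R : realFieldType) m (x y : 'I_m -> R) p q : dt x y q p = - dt x y p q.
Proof. by rewrite /dt opprB [x q * _]mulrC [y q * _]mulrC. Qed.

Lemma dt_diag (R : realFieldType) m (x y : 'I_m -> R) p : dt x y p p = 0.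
Proof. by rewrite /dt mulrC subrr. Qed.

Lemma trans_U (R : realFieldType) (ax ay bx by_ cx cy : R) :
  (0 < ay \/ (ay = 0 /\ 0 < ax)) -> (0 < by_ \/ (by_ = 0 /\ 0 < bx)) ->
  (0 < cy \/ (cy = 0 /\ 0 < cx)) ->
  0 < ax * by_ - ay * bx -> 0 < bx * cy - by_ * cx -> ax * cy - ay * cx != 0 ->
  0 < ax * cy - ay * cx.
Proof.
move=> Ha Hb Hc Hab Hbc Hac.
have id : (ax * by_ - ay * bx) * cy + (bx * cy - by_ * cx) * ay = (ax * cy - ay * cx) * by_.
  rewrite !mulrBl !addrA.
  have e1 : bx * cy * ay = ay * bx * cy by rewrite mulrC mulrA.
  have e2 : by_ * cx * ay = ay * cx * by_ by rewrite mulrC mulrA mulrAC.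
  by rewrite e1 subrK e2 mulrAC.
have ay0 : 0 <= ay by case: Ha => [/ltW|[->]].
have cy0 : 0 <= cy by case: Hc => [/ltW|[->]].
case: Hb => [Hb|[Hb0 Hbx]].
  have : 0 <= (ax * cy - ay * cx) * by_.
    by rewrite -id addr_ge0 // mulr_ge0 // ltW.
  rewrite pmulr_lge0 // le_eqVlt => /orP[/eqP H|//].
  by rewrite -H eqxx in Hac.
exfalso; move: Hab; rewrite Hb0 mulr0 sub0r oppr_gt0 => H.
by have := lt_le_trans H (mulr_ge0 ay0 (ltW Hbx)); rewrite ltxx.
Qed.

Lemma sum_alt_even m : ~~ odd m -> \sum_(k < m) ((-1) ^+ k : int) = 0.
Proof.
move=> Hm; rewrite -(odd_double_half m) (negbTE Hm) add0n.
elim: (m./2) => [|t IH]; first by rewrite big_ord0.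
rewrite doubleS !big_ord_recr /= IH add0r.
by rewrite exprS mulN1r subrr.
Qed.

Lemma combU (R : realFieldType) m (x y : 'I_m -> R) :
  ~~ odd m -> (forall p q, p != q -> dt x y p q != 0) ->
  (forall p, 0 < y p \/ (y p = 0 /\ 0 < x p)) ->
  \sum_(i < m) \prod_(q < m | q != i) sgz (dt x y i q) = 0.
Proof.
move=> Hm Hnz HU.
pose r i := #|[pred q | 0 < dt x y q i]|.
have Hterm i : \prod_(q < m | q != i) sgz (dt x y i q) = (-1) ^+ r i.
  rewrite (eq_bigr (fun q => if 0 < dt x y q i then -1 else 1)); last first.
    move=> q Hq; have Hq' : dt x y q i != 0 := Hnz _ _ Hq.
    rewrite (dt_anti x y q i).
    case: ifP => H; first by rewrite ltr0_sgz // oppr_lt0.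
    apply: gtr0_sgz; rewrite oppr_gt0 lt_neqAle Hq' /=.
    by rewrite leNgt H.
  rewrite -big_mkcondr /= /r -prodr_const; apply: eq_bigl => q; rewrite !inE.
  by case: (eqVneq q i) => [->|//]; rewrite dt_diag ltxx.
have trans a b c : 0 < dt x y a b -> 0 < dt x y b c -> a != c -> 0 < dt x y a c.
  move=> Hab Hbc Hac; exact: trans_U (HU a) (HU b) (HU c) Hab Hbc (Hnz _ _ Hac).
have rlt p q : 0 < dt x y p q -> (r p < r q)%N.
  move=> Hpq; apply: proper_card; apply/properP; split.
    apply/subsetP => t; rewrite !inE => Htp.
    have Htq : t != q.
      apply/eqP => Etq; rewrite Etq (dt_anti x y p q) oppr_gt0 in Htp.
      by have := lt_trans Htp Hpq; rewrite ltxx.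
    exact: trans Htp Hpq Htq.
  by exists p; rewrite !inE ?dt_diag ?ltxx.
have rle i : (r i < m)%N.
  rewrite -[m]card_ord; apply: proper_card; apply/properP; split.
    by apply/subsetP.
  by exists i; rewrite !inE ?dt_diag ?ltxx.
pose r' i := Ordinal (rle i).
have r'inj : injective r'.
  move=> p q /(congr1 val) /= Epq; apply/eqP; apply: contraT => Hpq.
  have := Hnz _ _ Hpq; rewrite neq_lt => /orP[H|H].
    by have := rlt q p; rewrite dt_anti oppr_gt0 H Epq ltnn => /(_ isT).
  by have := rlt p q; rewrite H Epq ltnn => /(_ isT).
rewrite (eq_bigr (fun i => (-1) ^+ r' i)); last by move=> i _; rewrite Hterm.
transitivity (\sum_(k < m) ((-1) ^+ k : int)); last exact: sum_alt_even.
by rewrite [RHS](reindex_inj r'inj) /=.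
Qed.

Lemma prod_lift (T : comRingType) n (j : 'I_n.+1) (F : 'I_n.+1 -> T) :
  \prod_(q < n.+1 | q != j) F q = \prod_(k < n) F (lift j k).
Proof.
rewrite (reindex_omap (lift j) (unlift j)) /=.
  by under eq_bigl do rewrite liftK eq_sym neq_lift eqxx.
by move=> i; case: unliftP => [k ->|->]; rewrite ?eqxx.
Qed.

Lemma comb (R : realFieldType) n (x y : 'I_n.+2 -> R) :
  ~~ odd n -> (forall p q, p != q -> dt x y p q != 0) ->
  \sum_(i < n.+2) \prod_(q < n.+2 | q != i) sgz (dt x y i q) = 0.
Proof.
move=> Hn Hnz.
pose c p := (0 < y p) || ((y p == 0) && (0 < x p)).
pose s p : R := (-1) ^+ (~~ c p).
pose e p : int := (-1) ^+ (~~ c p).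
have sgs p : sgz (s p) = e p.
  by rewrite /s /e; case: (~~ c p); rewrite ?expr1 ?expr0 ?sgzN1 ?sgz1.
have ee p : e p * e p = 1.
  by rewrite /e; case: (~~ c p); rewrite ?expr1 ?expr0 ?mulrNN mulr1.
have Hdt p q : dt (fun p => s p * x p) (fun p => s p * y p) p q = s p * s q * dt x y p q.
  by rewrite /dt mulrACA [s p * y p * _]mulrACA -mulrBr.
have := @combU R n.+2 (fun p => s p * x p) (fun p => s p * y p).
have Hn2 : ~~ odd n.+2 by rewrite /= negbK.
move=> /(_ Hn2) H.
have Hnz' : forall p q, p != q -> dt (fun p => s p * x p) (fun p => s p * y p) p q != 0.
  move=> p q Hpq; rewrite Hdt !mulf_neq0 ?signr_eq0 //; exact: Hnz.
have HU' : forall p, 0 < s p * y p \/ (s p * y p = 0 /\ 0 < s p * x p).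
  move=> p; rewrite /s; case Hc: (c p) => /=.
    rewrite !mul1r; case/orP: Hc => [->|/andP[/eqP-> ->]]; by [left|right].
  rewrite !expr1 !mulN1r; move/negbT: Hc; rewrite negb_or negb_and -leNgt.
  case/andP=> Hy; rewrite le_eqVlt in Hy; case/orP: Hy => [/eqP Hy0|Hy0] Hx.
    right; rewrite Hy0 oppr0; split => //.
    rewrite Hy0 eqxx /= -leNgt in Hx; rewrite oppr_gt0 lt_neqAle Hx andbT.
    apply/eqP => Hx0; have := Hnz p (lift p ord0) (neq_lift _ _).
    by rewrite /dt Hx0 Hy0 !mul0r subrr eqxx.
  by left; rewrite oppr_gt0.
have {H} := H Hnz' HU'.
pose S := \prod_(q < n.+2) e q.
have HS : S * S = 1 by rewrite /S -big_split /=; apply: big1 => q _; exact: ee.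
have Hterm i : \prod_(q < n.+2 | q != i)
    sgz (dt (fun p => s p * x p) (fun p => s p * y p) i q) =
    S * \prod_(q < n.+2 | q != i) sgz (dt x y i q).
  under eq_bigr do rewrite Hdt !sgzM !sgs.
  rewrite !big_split /=.
  rewrite [\prod_(q < n.+2 | q != i) e i]prod_lift prodr_const card_ord.
  have -> : \prod_(q < n.+2 | q != i) e q = e i * S.
    by rewrite /S [in RHS](bigD1 i) //= mulrA ee mul1r.
  rewrite mulrA -exprSr.
  have -> : e i ^+ n.+2 = 1.
    by rewrite /e -exprM -signr_odd oddM /= negbK (negbTE Hn) andbF.
  by rewrite mul1r.
under eq_bigr do rewrite Hterm.
rewrite -mulr_sumr => H.
by rewrite -[LHS]mul1r -{1}HS -mulrA H mulr0.
Qed.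
Lemma cramer (R : comNzRingType) n (W : 'M[R]_(n.+1, n)) :
  \sum_(k < n.+1) ((-1) ^+ k * \det (row' k W)) *: row k W = 0.
Proof.
apply/rowP => c; rewrite summxE !mxE.
pose A : 'M[R]_(n.+1) := \matrix_(i, j)
  match unlift ord0 j with Some j' => W i j' | None => W i c end.
have HA : \det A = 0.
  rewrite -det_tr; apply: (@determinant_alternate _ _ _ ord0 (lift ord0 c)).
    exact: neq_lift.
  by move=> i; rewrite !mxE liftK unlift_none.
have HcolA : col' ord0 A = W by apply/matrixP => i j; rewrite !mxE liftK.
rewrite -[RHS]HA (expand_det_col A ord0); apply: eq_bigr => i _.
by rewrite !mxE unlift_none /cofactor HcolA addn0 mulrC.
Qed.
Local Close Scope ring_scope.
Ltac conv := repeat match goal with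
 | H : (leq ?a ?b) = true |- _ => move/ssrnat.leP: H => H
 | H : is_true (leq ?a ?b) |- _ => move/ssrnat.leP: H => H
 | H : (leq ?a ?b) = false |- _ => move/negbT: H; rewrite -ltnNge; move/ssrnat.ltP => H
end.
Lemma bumpE h i : bump h i = if h <= i then i.+1 else i.
Proof. by rewrite /bump; case: ssrnat.leqP. Qed.
Lemma bump_swap (p j j2 k : nat) :
  bump (bump p j) j2 = p ->
  bump p (bump j k) = bump (bump p j) (bump j2 k) /\
  (bump p j + j2 = (p + j).+1 \/ p + j = (bump p j + j2).+1).
Proof.
rewrite !bumpE; case E1: (p <= j); case E2: (j <= k); case E3: (j2 <= k);
  repeat (case: ifP => ?); move=> ?; conv; rewrite -?plusE; lia.
Qed.
Local Open Scope ring_scope.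

Lemma sgz_sign (R : realFieldType) k (x : R) : sgz ((-1) ^+ k * x) = (-1) ^+ k * sgz x.
Proof.
rewrite sgzM -signr_odd -[in RHS]signr_odd.
by case: (odd k); rewrite ?expr1 ?expr0 ?sgzN1 ?sgz1.
Qed.

Unset Implicit Arguments.
Theorem proposition3p5 (R : realFieldType) (n : nat) (v : 'I_n.+2 -> 'rV[R]_n) :
  ~~ odd n -> hereditarily_spanning v -> dP v = 0.
Proof.
move=> Hn Hs.
pose V := \matrix_(p < n.+2) v p.
pose D (i : 'I_n.+2) (j : 'I_n.+1) := \det (row' j (row' i V)).
have HVf (f : 'I_n -> 'I_n.+2) (i : 'I_n.+2) (j : 'I_n.+1) : (forall k, f k = lift i (lift j k)) ->
    \matrix_(k < n) v (f k) = row' j (row' i V).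
  by move=> Hf; apply/matrixP => a b; rewrite !mxE Hf.
have Hor i j : Or (fun k => v (lift i (lift j k))) = sgz (D i j).
  by rewrite /Or /D (HVf _ i j).
have HD0 i j : D i j != 0.
  have Hinj : injective (fun k => lift i (lift j k)).
    by move=> a b /lift_inj /lift_inj.
  have := Hs _ Hinj; rewrite (HVf _ i j) // row_full_unit unitmxE unitfE.
  by [].
have dep i : \sum_(j < n.+1) ((-1) ^+ j * D i j) *: v (lift i j) = 0.
  rewrite -[RHS](cramer (row' i V)); apply: eq_bigr => j _; congr (_ *: _).
  by apply/rowP => b; rewrite !mxE.
pose M (p q : 'I_n.+2) : R := (-1) ^+ p *
  (match unlift p q with Some j => (-1) ^+ j * D p j | None => 0 end).
have depM p : \sum_q M p q *: v q = 0.
  rewrite (bigD1_ord p) //= /M unlift_none mulr0 scale0r add0r.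
  rewrite -[RHS](scaler0 _ ((-1) ^+ p)) -[in RHS](dep p) scaler_sumr; apply: eq_bigr => j _.
  by rewrite liftK scalerA.
have Manti p q : M q p = - M p q.
  case: (eqVneq p q) => [->|Hpq].
    by rewrite /M unlift_none mulr0 oppr0.
  rewrite /M; case: unliftP => [j2 Ep|Ep]; last by rewrite Ep eqxx in Hpq.
  case: unliftP => [j Eq|Eq]; last by rewrite Eq eqxx in Hpq.
  have Hq : val q = bump p j by rewrite Eq.
  have Hp : val p = bump q j2 by rewrite {1}Ep.
  have Hb : bump (bump p j) j2 = p by rewrite -Hq -Hp.
  have Hsw k := @bump_swap p j j2 k Hb.
  have -> : D q j2 = D p j.
    rewrite /D; congr (\det _); apply/matrixP => a b; rewrite !mxE.
    have -> : lift q (lift j2 a) = lift p (lift j a).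
      by apply/val_inj; rewrite /= Hq; symmetry; exact: (Hsw a).1.
    by [].
  rewrite !mulrA -!exprD Hq.
  case: (Hsw 0%N).2 => ->; rewrite exprS mulN1r mulNr ?opprK //.
have indep (g : 'I_n.+2 -> R) : \sum_q g q *: v q = 0 -> g ord0 = 0 ->
    g (lift ord0 ord0) = 0 -> forall q, g q = 0.
  move=> Hsum H0 H1.
  pose f (k : 'I_n) : 'I_n.+2 := lift ord0 (lift ord0 k).
  have Hinj : injective f by move=> a b /lift_inj /lift_inj.
  pose B := \matrix_(k < n) v (f k).
  have HB : B \in unitmx by rewrite -row_full_unit; exact: Hs.
  pose u := \row_(k < n) g (f k).
  have Hu : u *m B = 0.
    rewrite mulmx_sum_row -[RHS]Hsum big_ord_recl H0 scale0r add0r.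
    rewrite big_ord_recl H1 scale0r add0r.
    apply: eq_bigr => k _; rewrite !mxE; congr (_ *: _).
    by apply/rowP => b; rewrite !mxE.
  have u0 : u = 0 by rewrite -(mulmxK HB u) Hu mul0mx.
  move=> q; case: (unliftP ord0 q) => [q1 ->|->] //.
  case: (unliftP ord0 q1) => [k ->|->] //.
  by have := congr1 (fun w : 'rV_n => w 0 k) u0; rewrite !mxE.
have Mdiag p : M p p = 0 by rewrite /M unlift_none mulr0.
have Mnz p q : p != q -> M p q != 0.
  move=> Hpq; rewrite /M; case: unliftP => [j _|E].
    by rewrite !mulf_neq0 ?signr_eq0.
  by rewrite E eqxx in Hpq.
have HDM i j : D i j = (-1) ^+ (i + j) * M i (lift i j).
  rewrite /M liftK [_ * ((-1) ^+ j * _)]mulrA -exprD mulrA -exprD.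
  by rewrite -signr_odd oddD addbb expr0 mul1r.
clearbody M.
pose o0 : 'I_n.+2 := ord0.
pose o1 : 'I_n.+2 := lift ord0 ord0.
have key p q : M o0 o1 * M p q = dt (M o0) (M o1) p q.
  pose g t := M o0 o1 * M p t - M o0 p * M o1 t + M o1 p * M o0 t.
  have Hg : \sum_t g t *: v t = 0.
    rewrite [RHS](_ : 0 = M o0 o1 *: (\sum_t M p t *: v t) - M o0 p *: (\sum_t M o1 t *: v t)
       + M o1 p *: (\sum_t M o0 t *: v t)); last by rewrite !depM !scaler0 subrr addr0.
    rewrite !scaler_sumr -sumrB -big_split; apply: eq_bigr => t _.
    by rewrite /g scalerDl scalerBl !scalerA.
  have g0 : g o0 = 0.
    by rewrite /g Mdiag mulr0 addr0 (Manti o0 p) (Manti o0 o1) !mulrN opprK mulrC addNr.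
  have g1 : g o1 = 0.
    by rewrite /g Mdiag mulr0 subr0 (Manti o1 p) mulrN mulrC addNr.
  have := indep g Hg g0 g1 q; rewrite /g /dt => /eqP.
  by rewrite addr_eq0 subr_eq => /eqP ->; rewrite addrC.
have M01 : M o0 o1 != 0 by apply: Mnz; exact: neq_lift.
have ss : sgz (M o0 o1) * sgz (M o0 o1) = 1.
  rewrite -sgzM gtr0_sgz // lt_neqAle eq_sym mulf_neq0 //= -expr2.
  exact: sqr_ge0.
pose s0 := sgz (M o0 o1).
have sM p q : sgz (M p q) = s0 * sgz (dt (M o0) (M o1) p q).
  by rewrite /s0 -key sgzM mulrA ss mul1r.
have Hdtnz p q : p != q -> dt (M o0) (M o1) p q != 0.
  by move=> Hpq; rewrite -key mulf_neq0 // Mnz.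
pose K := \prod_(j < n.+1) ((-1) ^+ j * s0).
transitivity (\sum_(i < n.+2) K * \prod_(q < n.+2 | q != i) sgz (dt (M o0) (M o1) i q)).
  apply: eq_bigr => i _; rewrite /P.
  have Ht j : Or (fun k => v (lift i (lift j k))) =
      ((-1) ^+ i * ((-1) ^+ j * s0)) * sgz (dt (M o0) (M o1) i (lift i j)).
    by rewrite Hor HDM sgz_sign sM exprD !mulrA.
  under eq_bigr do rewrite Ht.
  rewrite big_split /= big_split /= prodr_const card_ord prod_lift !mulrA -exprS.
  have -> : ((-1) ^+ i) ^+ n.+2 = 1 :> int.
    by rewrite -exprM -signr_odd oddM /= negbK (negbTE Hn) andbF.
  by rewrite mul1r.
by rewrite -mulr_sumr comb // mulr0.
Qed.
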